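(* Let $X$ be a Polish space, $\mathbf f=(f_n)_n$ a sequence of continuous real-valued functions on $X$ which is relatively compact in $\mathcal B_1(X)$, and $f$ a continuous function belonging to the pointwise closure of $\{f_n\}$. Then for every $L\in[\mathbb N]$: $L\in\mathcal L_{\mathbf f,f}$ if and only if the tree $S_L$ is well-founded.
   Context: $\mathcal B_1(X)$ is the set of real-valued Baire-1 functions on $X$; $(f_n)_n$ is relatively compact in $\mathcal B_1(X)$ if the closure of $\{f_n\}$ in $\mathbb R^X$ is compact and contained in $\mathcal B_1(X)$. $[\mathbb N]$ is the set of infinite subsets of $\mathbb N$; $\mathcal L_{\mathbf f,f}=\{L\in[\mathbb N]:(f_n)_{n\in L}\to f\text{ pointwise}\}$. Fix a compatible complete metric on $X$, a countable dense $D\subseteq X$ and an enumeration $(B_n)_n$ of all closed balls with centers in $D$ and rational radii. A finite sequence $w=(l_0,\dots,l_k)$ is acceptable if $B_{l_0}\supseteq\dots\supseteq B_{l_k}$ and $\mathrm{diam}(B_{l_i})\le\frac1{i+1}$ for all $i$; the empty sequence is acceptable. A tree on $\mathbb N\times\mathbb N$ is identified with a set of pairs $(s,w)$ of finite sequences of equal length closed under initial segments; well-founded means no infinite branch. For $d\in\mathbb N$, $S^d_L$ is the set of $(s,w)$ with $|s|=|w|=k$, $s=(n_0<\dots<n_{k-1})$ with $n_i\in L$, $w=(l_0,\dots,l_{k-1})$ acceptable, and $|f_{n_i}(z)-f(z)|>\frac1{d+1}$ for all $i<k$ and $z\in B_{l_i}$. $S_L$ consists of the empty pair together with all $(d^\frown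 s',d^\frown w')$ with $d\in\mathbb N$ and $(s',w')\in S^d_L$. *)

(* Defs.v *)
From Stdlib Require Import Reals Lra List QArith Qreals.
Open Scope R_scope.

Definition is_metric {X : Type} (d : X -> X -> R) : Prop :=
  (forall x y, 0 <= d x y) /\
  (forall x y, d x y = 0 <-> x = y) /\
  (forall x y, d x y = d y x) /\
  (forall x y z, d x z <= d x y + d y z).

Definition complete_metric {X : Type} (d : X -> X -> R) : Prop :=
  forall u : nat -> X,
    (forall eps, eps > 0 -> exists N, forall m n, (m >= N)%nat -> (n >= N)%nat ->
        d (u m) (u n) < eps) ->
    exists x, forall eps, eps > 0 -> exists N, forall n, (n >= N)%nat -> d (u n) x < eps.

Definition countable_set {X : Type} (D : X -> Prop) : Prop :=
  exists code : X -> nat, forall x y, D x -> D y -> code x = code y -> x = y.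

Definition dense_set {X : Type} (d : X -> X -> R) (D : X -> Prop) : Prop :=
  forall x eps, eps > 0 -> exists c, D c /\ d x c < eps.

Definition closed_ball {X : Type} (d : X -> X -> R) (c : X) (r : R) : X -> Prop :=
  fun z => d c z <= r.

Definition ball_enumeration {X : Type} (d : X -> X -> R) (D : X -> Prop)
  (B : nat -> X -> Prop) : Prop :=
  (forall n, exists c (q : Q), D c /\ (0 < q)%Q /\
       forall z, B n z <-> closed_ball d c (Q2R q) z) /\
  (forall c (q : Q), D c -> (0 < q)%Q ->
       exists n, forall z, B n z <-> closed_ball d c (Q2R q) z).

Definition diam_le {X : Type} (d : X -> X -> R) (A : X -> Prop) (r : R) : Prop :=
  forall x y, A x -> A y -> d x y <= r.

Definition continuous_on {X : Type} (d : X -> X -> R) (g : X -> R) : Prop :=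
  forall x eps, eps > 0 -> exists delta, delta > 0 /\
    forall y, d x y < delta -> Rabs (g y - g x) < eps.

Definition baire1 {X : Type} (d : X -> X -> R) (g : X -> R) : Prop :=
  exists h : nat -> X -> R, (forall n, continuous_on d (h n)) /\
    forall x, Un_cv (fun n => h n x) (g x).

Definition basic_nbhd {X : Type} (g : X -> R) (F : list X) (eps : R) (h : X -> R) : Prop :=
  forall x, In x F -> Rabs (h x - g x) < eps.

Definition pw_open {X : Type} (O : (X -> R) -> Prop) : Prop :=
  forall g, O g -> exists (F : list X) (eps : R), eps > 0 /\
    forall h, basic_nbhd g F eps h -> O h.

Definition pw_closure {X : Type} (A : (X -> R) -> Prop) (g : X -> R) : Prop :=
  forall (F : list X) (eps : R), eps > 0 -> exists h, A h /\ basic_nbhd g F eps h.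

Definition pw_compact {X : Type} (K : (X -> R) -> Prop) : Prop :=
  forall (I : Type) (U : I -> (X -> R) -> Prop),
    (forall i, pw_open (U i)) ->
    (forall g, K g -> exists i, U i g) ->
    exists l : list I, forall g, K g -> exists i, In i l /\ U i g.

Definition range_seq {X : Type} (fs : nat -> X -> R) : (X -> R) -> Prop :=
  fun g => exists n, g = fs n.

Definition rel_compact_B1 {X : Type} (d : X -> X -> R) (fs : nat -> X -> R) : Prop :=
  pw_compact (pw_closure (range_seq fs)) /\
  (forall g, pw_closure (range_seq fs) g -> baire1 d g).

Definition infinite_nat (L : nat -> Prop) : Prop :=
  forall m, exists n, (n >= m)%nat /\ L n.

Definition converges_along {X : Type} (fs : nat -> X -> R) (f : X -> R)
  (L : nat -> Prop) : Prop :=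
  forall x eps, eps > 0 -> exists N, forall n, L n -> (n >= N)%nat ->
    Rabs (fs n x - f x) < eps.

Definition acceptable {X : Type} (d : X -> X -> R) (B : nat -> X -> Prop)
  (w : list nat) : Prop :=
  (forall i, (S i < length w)%nat ->
     forall z, B (nth (S i) w 0%nat) z -> B (nth i w 0%nat) z) /\
  (forall i, (i < length w)%nat -> diam_le d (B (nth i w 0%nat)) (1 / (INR i + 1))).

Definition S_d {X : Type} (d : X -> X -> R) (B : nat -> X -> Prop)
  (fs : nat -> X -> R) (f : X -> R) (L : nat -> Prop) (dd : nat)
  (s w : list nat) : Prop :=
  length s = length w /\
  (forall i j, (i < j)%nat -> (j < length s)%nat -> (nth i s 0 < nth j s 0)%nat) /\
  (forall i, (i < length s)%nat -> L (nth i s 0%nat)) /\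
  acceptable d B w /\
  (forall i, (i < length s)%nat -> forall z, B (nth i w 0%nat) z ->
     Rabs (fs (nth i s 0%nat) z - f z) > 1 / (INR dd + 1)).

Definition S_tree {X : Type} (d : X -> X -> R) (B : nat -> X -> Prop)
  (fs : nat -> X -> R) (f : X -> R) (L : nat -> Prop) (s w : list nat) : Prop :=
  (s = nil /\ w = nil) \/
  (exists dd s' w', s = dd :: s' /\ w = dd :: w' /\ S_d d B fs f L dd s' w').

Definition well_founded_tree (T : list nat -> list nat -> Prop) : Prop :=
  ~ exists a b : nat -> nat,
      forall k, T (map a (seq 0 k)) (map b (seq 0 k)).

(* Main.v *)
Require Import Defs.
From Stdlib Require Import Reals List QArith Qreals.
From Stdlib Require Import Lra Lia ZArith ClassicalEpsilon Classical.
Open Scope R_scope.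

Lemma my_choice {A B : Type} (P : A -> B -> Prop) :
  (forall a, exists b, P a b) -> exists f : A -> B, forall a, P a (f a).
Proof.
  intros H. exists (fun a => proj1_sig (constructive_indefinite_description _ (H a))).
  intro a. apply (proj2_sig (constructive_indefinite_description _ (H a))).
Qed.

Lemma small_q : forall t, t > 0 -> exists q : Q, (0 < q)%Q /\ 0 < Q2R q /\ Q2R q < t.
Proof.
  intros t Ht. destruct (archimed_cor1 t Ht) as [N [HN HN0]].
  exists (Qmake 1 (Pos.of_nat N)).
  assert (E: Q2R (Qmake 1 (Pos.of_nat N)) = / INR N).
  { unfold Q2R; simpl. rewrite INR_IZR_INZ. rewrite <- (Nat2Pos.id N) at 2 by lia.
    rewrite Znat.positive_nat_Z. lra. }
  rewrite E. split. { unfold Qlt; simpl; lia. }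
  split; [|lra]. apply Rinv_0_lt_compat. apply lt_0_INR. lia.
Qed.

Lemma small_nat : forall t, t > 0 -> exists N : nat, 1 / (INR N + 1) < t.
Proof.
  intros t Ht. destruct (archimed_cor1 t Ht) as [N [HN HN0]].
  exists N. apply Rle_lt_trans with (/ INR N); [|exact HN].
  assert (0 < INR N) by (apply lt_0_INR; lia).
  unfold Rdiv. rewrite Rmult_1_l. apply Rlt_le, Rinv_lt_contravar; [nra|lra].
Qed.

Lemma nth_ms (a : nat -> nat) k i : (i < k)%nat -> nth i (map a (seq 1 k)) 0%nat = a (S i).
Proof.
  intros Hi. rewrite (nth_indep _ 0%nat (a 0%nat)) by (rewrite length_map, length_seq; lia).
  rewrite map_nth, seq_nth by lia. reflexivity.
Qed.

Lemma branch_get {X : Type} (d : X -> X -> R) B fs f L (a b : nat -> nat)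
  (H : forall k, S_tree d B fs f L (map a (seq 0 k)) (map b (seq 0 k))) k :
  S_d d B fs f L (a 0%nat) (map a (seq 1 k)) (map b (seq 1 k)).
Proof.
  specialize (H (S k)). simpl in H.
  destruct H as [[H _]|[dd [s' [w' [E1 [E2 Hs]]]]]]; [discriminate|].
  injection E1; injection E2; intros; subst. replace (a 0%nat) with (b 0%nat) by congruence; exact Hs.
Qed.

Lemma forward {X : Type} (d : X -> X -> R) (hd : is_metric d) (hc : complete_metric d)
  D B (hB : ball_enumeration d D B) fs f L :
  converges_along fs f L -> well_founded_tree (S_tree d B fs f L).
Proof.
  intros Hconv [a [b Hbr]].
  destruct hd as [Hnn [H0 [Hsym Htri]]].
  set (dd := a 0%nat). set (n := fun i => a (S i)). set (l := fun i => b (S i)).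
  assert (HL : forall i, L (n i)).
  { intro i. destruct (branch_get d B fs f L a b Hbr (S i)) as [_ [_ [HL _]]].
    specialize (HL i). rewrite length_map, length_seq, nth_ms in HL by lia. apply HL; lia. }
  assert (Hinc : forall i j, (i < j)%nat -> (n i < n j)%nat).
  { intros i j Hij. destruct (branch_get d B fs f L a b Hbr (S j)) as [_ [Hi _]].
    specialize (Hi i j Hij). rewrite length_map, length_seq, !nth_ms in Hi by lia. apply Hi; lia. }
  assert (Hnest1 : forall i z, B (l (S i)) z -> B (l i) z).
  { intros i z. destruct (branch_get d B fs f L a b Hbr (S (S i))) as [_ [_ [_ [[Ha _] _]]]].
    specialize (Ha i). rewrite length_map, length_seq, !nth_ms in Ha by lia. apply Ha; lia. }
  assert (Hdiam : forall i, diam_le d (B (l i)) (1 / (INR i + 1))).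
  { intros i. destruct (branch_get d B fs f L a b Hbr (S i)) as [_ [_ [_ [[_ Ha] _]]]].
    specialize (Ha i). rewrite length_map, length_seq, !nth_ms in Ha by lia. apply Ha; lia. }
  assert (Hval : forall i z, B (l i) z -> Rabs (fs (n i) z - f z) > 1 / (INR dd + 1)).
  { intros i z. destruct (branch_get d B fs f L a b Hbr (S i)) as [_ [_ [_ [_ Ha]]]].
    specialize (Ha i). rewrite length_map, length_seq, !nth_ms in Ha by lia. apply Ha; lia. }
  destruct hB as [hB1 _].
  assert (Hg : forall k, exists p : X * R, 0 <= snd p /\ forall z, B k z <-> d (fst p) z <= snd p).
  { intro k. destruct (hB1 k) as [c [q [_ [Hq Hb]]]]. exists (c, Q2R q). simpl. split.
    - replace 0 with (Q2R 0) by (unfold Q2R; simpl; lra). apply Qle_Rle. apply Qlt_le_weak. exact Hq.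
    - exact Hb. }
  destruct (my_choice _ Hg) as [g Hgp].
  set (e := fun i => fst (g (l i))). set (rr := fun i => snd (g (l i))).
  assert (Hin : forall i, B (l i) (e i)).
  { intro i. apply (proj2 (Hgp (l i))). unfold e. rewrite (proj2 (H0 _ _) eq_refl). apply (proj1 (Hgp (l i))). }
  assert (Hnest : forall i j, (i <= j)%nat -> forall z, B (l j) z -> B (l i) z).
  { intros i j Hij. induction Hij; auto. }
  assert (Hcau : forall eps, eps > 0 -> exists N, forall m k, (m >= N)%nat -> (k >= N)%nat -> d (e m) (e k) < eps).
  { intros eps He. destruct (small_nat eps He) as [N HN]. exists N. intros m k Hm Hk.
    apply Rle_lt_trans with (1 / (INR N + 1)); [|exact HN].
    apply (Hdiam N); [apply (Hnest N m) | apply (Hnest N k)]; auto. }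
  destruct (hc e Hcau) as [y Hy].
  assert (Hyin : forall i, B (l i) y).
  { intro i. apply (proj2 (Hgp (l i))). apply Rnot_lt_le. intro Hlt.
    destruct (Hy (d (fst (g (l i))) y - snd (g (l i)))) as [N HN]; [lra|].
    specialize (HN (Nat.max N i) ltac:(lia)).
    assert (Hm : B (l i) (e (Nat.max N i))) by (apply (Hnest i (Nat.max N i)); [lia| apply Hin]).
    apply (proj2 (Hgp (l i))) in Hm.
    specialize (Htri (fst (g (l i))) (e (Nat.max N i)) y). lra. }
  assert (Hge : forall i, (n i >= i)%nat).
  { induction i; [lia|]. specialize (Hinc i (S i) ltac:(lia)). lia. }
  assert (Hpos : 1 / (INR dd + 1) > 0).
  { assert (0 <= INR dd) by apply pos_INR. unfold Rdiv. rewrite Rmult_1_l. apply Rinv_0_lt_compat. lra. }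
  destruct (Hconv y _ Hpos) as [N HN].
  specialize (HN (n N) (HL N) (Hge N)). specialize (Hval N y (Hyin N)). lra.
Qed.

Lemma backward {X : Type} (d : X -> X -> R) (hd : is_metric d)
  D (hDd : dense_set d D) B (hB : ball_enumeration d D B)
  fs (hfs : forall n, continuous_on d (fs n)) f (hf : continuous_on d f) L :
  well_founded_tree (S_tree d B fs f L) -> converges_along fs f L.
Proof.
  intros Hwf. apply NNPP; intro Hnc. apply Hwf.
  destruct hd as [Hnn [H0 [Hsym Htri]]].
  assert (Hex : exists x eps, eps > 0 /\ forall N, exists n, L n /\ (n >= N)%nat /\ Rabs (fs n x - f x) >= eps).
  { apply NNPP; intro Hn. apply Hnc. intros x eps He. apply NNPP; intro H1. apply Hn.
    exists x, eps. split; auto. intro N. apply NNPP; intro H2. apply H1. exists N.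
    intros n Hn1 Hn2. destruct (Rlt_dec (Rabs (fs n x - f x)) eps) as [H3|H3]; [exact H3|].
    exfalso; apply H2; exists n; repeat split; auto; lra. }
  destruct Hex as [x [eps [He HN]]].
  destruct (my_choice _ HN) as [gN HgN].
  set (ns := fix ns i := match i with 0%nat => gN 0%nat | S j => gN (S (ns j)) end).
  assert (Hns : forall i, L (ns i) /\ Rabs (fs (ns i) x - f x) >= eps).
  { intro i; destruct i; [change (ns 0%nat) with (gN 0%nat) | change (ns (S i)) with (gN (S (ns i)))];
    match goal with |- context [gN ?k] => destruct (HgN k) as [? [? ?]] end; auto. }
  assert (Hstep : forall i, (ns i < ns (S i))%nat).
  { intro i. change (ns (S i)) with (gN (S (ns i))). destruct (HgN (S (ns i))) as [_ [? _]]. lia. }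
  assert (Hinc : forall i j, (i < j)%nat -> (ns i < ns j)%nat).
  { intros i j Hij. induction Hij. apply Hstep. specialize (Hstep m). lia. }
  destruct (small_nat (eps / 2)) as [dd Hdd]; [lra|].
  assert (Hdel : forall i, exists del, del > 0 /\ forall z, d x z < del -> Rabs (fs (ns i) z - f z) > 1 / (INR dd + 1)).
  { intro i. destruct (hfs (ns i) x (eps / 4)) as [d1 [Hd1 H1]]; [lra|].
    destruct (hf x (eps / 4)) as [d2 [Hd2 H2]]; [lra|].
    exists (Rmin d1 d2). split; [apply Rmin_glb_lt; lra|].
    intros z Hz. specialize (H1 z ltac:(pose proof (Rmin_l d1 d2); lra)).
    specialize (H2 z ltac:(pose proof (Rmin_r d1 d2); lra)).
    destruct (Hns i) as [_ H3]. revert H1 H2 H3. split_Rabs; lra. }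
  destruct (my_choice _ Hdel) as [del Hdelp].
  assert (Hq : forall t, exists q : Q, t > 0 -> (0 < q)%Q /\ 0 < Q2R q /\ Q2R q < t).
  { intro t. destruct (Rlt_dec 0 t) as [Ht|Ht].
    - destruct (small_q t Ht) as [q Hq]. exists q; auto.
    - exists 0%Q. intro; lra. }
  destruct (my_choice _ Hq) as [Qf HQf].
  assert (Hhalf : forall i, 0 < 1 / (2 * (INR i + 1))).
  { intro i. assert (0 <= INR i) by apply pos_INR. unfold Rdiv. rewrite Rmult_1_l.
    apply Rinv_0_lt_compat. lra. }
  set (rq := fix rq i := match i with
     | 0%nat => Qf (Rmin (del 0%nat / 3) (1 / (2 * (INR 0 + 1))))
     | S j => Qf (Rmin (Rmin (del (S j) / 3) (1 / (2 * (INR (S j) + 1)))) (Q2R (rq j) / 3)) end).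
  assert (Hr : forall i, (0 < rq i)%Q /\ 0 < Q2R (rq i) /\ Q2R (rq i) < del i / 3
                /\ Q2R (rq i) < 1 / (2 * (INR i + 1))).
  { induction i.
    - change (rq 0%nat) with (Qf (Rmin (del 0%nat / 3) (1 / (2 * (INR 0 + 1))))).
      destruct (HQf (Rmin (del 0%nat / 3) (1 / (2 * (INR 0 + 1))))) as [A1 [A2 A3]].
      + apply Rmin_glb_lt; [destruct (Hdelp 0%nat); lra| apply Hhalf].
      + pose proof (Rmin_l (del 0%nat / 3) (1 / (2 * (INR 0 + 1)))).
        pose proof (Rmin_r (del 0%nat / 3) (1 / (2 * (INR 0 + 1)))). repeat split; auto; lra.
    - change (rq (S i)) with (Qf (Rmin (Rmin (del (S i) / 3) (1 / (2 * (INR (S i) + 1)))) (Q2R (rq i) / 3))).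
      destruct IHi as [I1 [I2 [I3 I4]]].
      destruct (HQf (Rmin (Rmin (del (S i) / 3) (1 / (2 * (INR (S i) + 1)))) (Q2R (rq i) / 3))) as [A1 [A2 A3]].
      + apply Rmin_glb_lt; [apply Rmin_glb_lt; [destruct (Hdelp (S i)); lra| apply Hhalf]|lra].
      + pose proof (Rmin_l (Rmin (del (S i) / 3) (1 / (2 * (INR (S i) + 1)))) (Q2R (rq i) / 3)).
        pose proof (Rmin_l (del (S i) / 3) (1 / (2 * (INR (S i) + 1)))).
        pose proof (Rmin_r (del (S i) / 3) (1 / (2 * (INR (S i) + 1)))). repeat split; auto; lra. }
  assert (Hr3 : forall i, Q2R (rq (S i)) < Q2R (rq i) / 3).
  { intro i. change (rq (S i)) with (Qf (Rmin (Rmin (del (S i) / 3) (1 / (2 * (INR (S i) + 1)))) (Q2R (rq i) / 3))).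
    destruct (Hr i) as [_ [Hp _]].
    destruct (HQf (Rmin (Rmin (del (S i) / 3) (1 / (2 * (INR (S i) + 1)))) (Q2R (rq i) / 3))) as [A1 [A2 A3]].
    + apply Rmin_glb_lt; [apply Rmin_glb_lt; [destruct (Hdelp (S i)); lra| apply Hhalf]|lra].
    + pose proof (Rmin_r (Rmin (del (S i) / 3) (1 / (2 * (INR (S i) + 1)))) (Q2R (rq i) / 3)). lra. }
  assert (Hc : forall t, exists c, t > 0 -> D c /\ d x c < t).
  { intro t. destruct (Rlt_dec 0 t) as [Ht|Ht].
    - destruct (hDd x t Ht) as [c Hc]. exists c; auto.
    - exists x. intro; lra. }
  destruct (my_choice _ Hc) as [cf Hcf].
  destruct hB as [_ hB2].
  assert (Hi : forall p : X * Q, exists k, D (fst p) -> (0 < snd p)%Q ->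
              forall z, B k z <-> closed_ball d (fst p) (Q2R (snd p)) z).
  { intro p. destruct (classic (D (fst p) /\ (0 < snd p)%Q)) as [[H1 H2]|H1].
    - destruct (hB2 _ _ H1 H2) as [k Hk]. exists k; auto.
    - exists 0%nat. intros; exfalso; auto. }
  destruct (my_choice _ Hi) as [idx Hidx].
  set (r := fun i => Q2R (rq i)).
  set (c := fun i => cf (r i / 2)).
  set (l := fun i => idx (c i, rq i)).
  assert (HB : forall i z, B (l i) z <-> d (c i) z <= r i).
  { intros i z. destruct (Hr i) as [A1 [A2 _]].
    destruct (Hcf (r i / 2)) as [A3 _]; [unfold r; lra|].
    apply (Hidx (c i, rq i) A3 A1 z). }
  assert (Hcx : forall i, d x (c i) < r i / 2).
  { intro i. destruct (Hr i) as [_ [A2 _]]. destruct (Hcf (r i / 2)) as [_ A3]; [unfold r; lra|]. exact A3. }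
  assert (Hout : forall i z, B (l i) z -> d x z < 3 * r i / 2).
  { intros i z Hz. apply HB in Hz. specialize (Hcx i). specialize (Htri x (c i) z). lra. }
  assert (Hinn : forall i z, d x z < r i / 2 -> B (l i) z).
  { intros i z Hz. apply HB. specialize (Hcx i). specialize (Htri (c i) x z).
    rewrite (Hsym (c i) x) in Htri. lra. }
  exists (fun k => match k with 0%nat => dd | S i => ns i end),
         (fun k => match k with 0%nat => dd | S i => l i end).
  intro k. destruct k as [|k]; [left; split; reflexivity|right].
  exists dd, (map (fun k => match k with 0%nat => dd | S i => ns i end) (seq 1 k)),
         (map (fun k => match k with 0%nat => dd | S i => l i end) (seq 1 k)).
  split; [reflexivity|split; [reflexivity|]].
  unfold S_d, acceptable. rewrite !length_map, !length_seq.
  split; [reflexivity|]. split; [|split; [|split; [split|]]].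
  - intros i j Hij Hj. rewrite !nth_ms by lia. apply Hinc; exact Hij.
  - intros i Hi1. rewrite nth_ms by lia. apply Hns.
  - intros i Hi1 z. rewrite !nth_ms by lia. intro Hz. apply Hinn.
    apply Hout in Hz. specialize (Hr3 i). unfold r in *. lra.
  - intros i Hi1. rewrite !nth_ms by lia. intros z1 z2 H1 H2.
    apply HB in H1. apply HB in H2. specialize (Htri z1 (c i) z2). rewrite (Hsym z1 (c i)) in Htri.
    destruct (Hr i) as [_ [_ [_ A4]]].
    assert (E : 1 / (2 * (INR i + 1)) = (1 / (INR i + 1)) / 2).
    { assert (0 <= INR i) by apply pos_INR. field. lra. }
    unfold r in *. lra.
  - intros i Hi1 z. rewrite !nth_ms by lia. intro Hz. apply Hout in Hz.
    apply (proj2 (Hdelp i)). destruct (Hr i) as [_ [_ [A3 _]]]. unfold r in *.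
    destruct (Hdelp i). lra.
Qed.

Theorem lemma5p12
  (X : Type) (d : X -> X -> R)
  (hd : is_metric d) (hcomplete : complete_metric d)
  (D : X -> Prop) (hDc : countable_set D) (hDd : dense_set d D)
  (B : nat -> X -> Prop) (hB : ball_enumeration d D B)
  (fs : nat -> X -> R) (hfs : forall n, continuous_on d (fs n))
  (hrc : rel_compact_B1 d fs)
  (f : X -> R) (hf : continuous_on d f) (hfcl : pw_closure (range_seq fs) f)
  (L : nat -> Prop) (hL : infinite_nat L) :
  converges_along fs f L <-> well_founded_tree (S_tree d B fs f L).
Proof.
  split.
  - apply (forward d hd hcomplete D B hB).
  - apply (backward d hd D hDd B hB fs hfs f hf L).
Qed.
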